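(* Fix $\theta\in[0,1]$ and let \[ A_r(\theta)=\Big[1+\theta\Big(\frac{2r}{n}-1\Big)\Big]\frac{B_r}{r},\qquad 1\le r\le n-1 . \] (i) For any $r^*(\theta)\in\arg\max\{A_r(\theta):1\le r\le n-1\}$, the prize schedule ${\bf v}^{r^*(\theta)}$ (awarding $r^*(\theta)$ equal prizes $1/r^*(\theta)$ at the top and zero to everyone else) maximizes $M({\bf v},\theta)$ over ${\bf v}\in\mathcal V$, and hence maximizes the equilibrium effort; the maximal value is $\max_r A_r(\theta)$. (ii) The optimal number of top prizes is weakly increasing in loss aversion: if $0\le\theta<\theta'\le1$, then $\max\arg\max_r A_r(\theta)\le\max\arg\max_r A_r(\theta')$ and $\min\arg\max_r A_r(\theta)\le\min\arg\max_r A_r(\theta')$.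
   Context: Fix an integer $n\ge 2$ and a noise distribution with cdf $F$ and density $f$ on $\mathbb R$ (integrals finite). For $r=1,\dots,n$ let $g_r(u)=u^{n-r}(1-u)^{r-1}$ and $\beta_r=\binom{n-1}{r-1}\int g_r'(F(t))f(t)^2dt$ (marginal effect of own effort on the probability of being ranked $r$ in a symmetric profile); $B_r=\sum_{k=1}^r\beta_k$, which for $1\le r\le n-1$ equals $r\binom{n-1}{r}\int F(t)^{n-1-r}[1-F(t)]^{r-1}f(t)^2dt>0$, and $B_n=0$. Let $\mathcal V=\{{\bf v}\in\mathbb R^n: v_1\ge\dots\ge v_n\ge 0,\ \sum_r v_r=1\}$, $R({\bf v})=\sum_r\beta_rv_r$, $L({\bf v})=-\frac1n\sum_{r=1}^n\sum_{s<r}(\beta_r+\beta_s)(v_s-v_r)$, $M({\bf v},\theta)=R({\bf v})+\theta L({\bf v})$, $\theta\in[0,1]$. For $1\le s\le n-1$, ${\bf v}^s=(\frac1s,\dots,\frac1s,0,\dots,0)$ has $s$ nonzero prizes. The symmetric equilibrium effort solves $c'(x^* )=M({\bf v},\theta)$ for a strictly increasing, strictly convex, differentiable cost $c$ with $c(0)=c'(0)=0$, so it is strictly increasing in $M$. *)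

(* Defs.v *)
From HB Require Import structures.
From mathcomp Require Import all_boot all_order all_algebra.
From mathcomp Require Import all_classical all_reals all_analysis.
Unset Printing Implicit Defensive.
Import Order.TTheory GRing.Theory Num.Theory.
Local Open Scope classical_set_scope.
Local Open Scope ring_scope.

(* Noise distribution: density f (measurable, >= 0, total mass 1, f^2 integrable
   so that all the integrals below are finite) and cdf F(t) = int_{(-oo,t]} f. *)
Definition noise_dist {R : realType} (F f : R -> R) : Prop :=
  [/\ measurable_fun [set: R] f,
      (forall t, 0 <= f t),
      (\int[lebesgue_measure]_(t in [set: R]) (f t)%:E = 1)%E,
      (forall t, F t = fine (\int[lebesgue_measure]_(x in `]-oo, t]) (f x)%:E)%E) &
      lebesgue_measure.-integrable [set: R] (fun t => (f t ^+ 2)%:E)].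

Definition gpoly {R : realType} (n r : nat) : {poly R} :=
  'X ^+ (n - r) * (1 - 'X) ^+ (r - 1).

(* beta_r = C(n-1, r-1) * int g_r'(F t) f(t)^2 dt, r = 1..n (1-based) *)
Definition beta {R : realType} (n : nat) (F f : R -> R) (r : nat) : R :=
  ('C(n - 1, r - 1))%:R *
  Rintegral lebesgue_measure [set: R]
    (fun t => ((@gpoly R n r)^`()).[F t] * f t ^+ 2).

Definition Bsum {R : realType} (n : nat) (F f : R -> R) (r : nat) : R :=
  \sum_(1 <= k < r.+1) beta n F f k.

(* prize vectors: v : 'I_n -> R, with v i = v_{i+1} (prize for rank i+1) *)
Definition in_V {R : realType} (n : nat) (v : 'I_n -> R) : Prop :=
  [/\ (forall i j : 'I_n, (i <= j)%N -> v j <= v i),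
      (forall i, 0 <= v i) &
      \sum_(i < n) v i = 1].

Definition Rv {R : realType} (n : nat) (F f : R -> R) (v : 'I_n -> R) : R :=
  \sum_(i < n) beta n F f i.+1 * v i.

Definition Lv {R : realType} (n : nat) (F f : R -> R) (v : 'I_n -> R) : R :=
  - (n%:R)^-1 * \sum_(i < n) \sum_(j < n | (j < i)%N)
       (beta n F f i.+1 + beta n F f j.+1) * (v j - v i).

Definition Mv {R : realType} (n : nat) (F f : R -> R) (v : 'I_n -> R) (theta : R) : R :=
  Rv n F f v + theta * Lv n F f v.

Definition vs {R : realType} (n s : nat) : 'I_n -> R :=
  fun i => if (i < s)%N then (s%:R)^-1 else 0.

Definition Ar {R : realType} (n : nat) (F f : R -> R) (theta : R) (r : nat) : R :=
  (1 + theta * (2 * r%:R / n%:R - 1)) * Bsum n F f r / r%:R.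

Definition is_argmax {R : realType} (n : nat) (F f : R -> R) (theta : R) (r : nat) : Prop :=
  (1 <= r <= n - 1)%N /\
  forall s : nat, (1 <= s <= n - 1)%N -> Ar n F f theta s <= Ar n F f theta r.

Definition is_max_argmax {R : realType} (n : nat) (F f : R -> R) (theta : R) (r : nat) : Prop :=
  is_argmax n F f theta r /\ forall s, is_argmax n F f theta s -> (s <= r)%N.

Definition is_min_argmax {R : realType} (n : nat) (F f : R -> R) (theta : R) (r : nat) : Prop :=
  is_argmax n F f theta r /\ forall s, is_argmax n F f theta s -> (r <= s)%N.

(* Main.v *)
Require Import Defs.
From HB Require Import structures.
From mathcomp Require Import all_boot all_order all_algebra.
From mathcomp Require Import all_classical all_reals all_analysis.
From mathcomp Require Import measurable_realfun.
From mathcomp Require Import ring lra zify.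
Import Order.TTheory GRing.Theory Num.Theory.
Local Open Scope ring_scope.

Section Ana.
Local Open Scope classical_set_scope.
Context {R : realType} (F f : R -> R) (nd : noise_dist F f).

Definition IF (u : R) := (\int[lebesgue_measure]_(x in `]-oo, u]) (f x)%:E)%E.

Lemma F01 t : 0 <= F t <= 1.
Proof.
case: nd => mf f0 f1 Fdef f2.
have mf' : measurable_fun [set: R] (EFin \o f).
  exact/measurable_EFinP.
have h0 : (0 <= IF t)%E.
  by rewrite /IF; apply: integral_ge0 => x _; rewrite lee_fin.
have h1 : (IF t <= 1)%E.
  rewrite /IF -f1; apply: ge0_subset_integral => //.
  by move=> x _; rewrite lee_fin.
rewrite Fdef -/(IF t); apply/andP; split; first exact: fine_ge0.
by rewrite -lee_fin fineK ?ge0_fin_numE// (le_lt_trans h1) ?ltry.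
Qed.

Lemma F_nd : nondecreasing_fun F.
Proof.
case: nd => mf f0 f1 Fdef f2 s t st.
have mf' : measurable_fun [set: R] (EFin \o f).
  exact/measurable_EFinP.
have hle u : (IF u <= 1)%E.
  rewrite /IF -f1; apply: ge0_subset_integral => //.
  by move=> x _; rewrite lee_fin.
have h0 u : (0 <= IF u)%E.
  by rewrite /IF; apply: integral_ge0 => x _; rewrite lee_fin.
rewrite !Fdef -/(IF s) -/(IF t); apply: fine_le.
- by rewrite ge0_fin_numE// (le_lt_trans (hle _)) ?ltry.
- by rewrite ge0_fin_numE// (le_lt_trans (hle _)) ?ltry.
apply: ge0_subset_integral => //.
- exact: measurable_funS mf'.
- by move=> x _; rewrite lee_fin.
- by move=> x /=; rewrite !in_itv /= => /le_trans; apply.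
Qed.

Lemma F_meas : measurable_fun [set: R] F.
Proof. by apply: nondecreasing_measurable => //; exact: F_nd. Qed.

Lemma poly_bnd_meas (p : {poly R}) :
  measurable_fun [set: R] (fun t => p.[F t]) /\
  exists K, forall x, 0 <= x <= 1 -> `|p.[x]| <= K.
Proof.
elim/poly_ind: p => [|p c [IHm [K IHK]]].
  split; first by under eq_fun do rewrite horner0; exact: measurable_cst.
  by exists 0 => x _; rewrite horner0 normr0.
split.
  under eq_fun do rewrite hornerMXaddC.
  apply: measurable_funD => //; apply: measurable_funM => //; exact: F_meas.
exists (K + `|c|) => x /andP[x0 x1]; rewrite hornerMXaddC.
rewrite (le_trans (ler_normD _ _))// lerD2r normrM.
rewrite (le_trans (ler_wpM2l (normr_ge0 _) (_ : `|x| <= 1)))//.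
  by rewrite ger0_norm.
by rewrite mulr1 IHK // x0 x1.
Qed.

Definition hp (p : {poly R}) := fun t => p.[F t] * f t ^+ 2.

Lemma hp_int p : lebesgue_measure.-integrable [set: measurableTypeR R] (EFin \o hp p).
Proof.
have [mp [K HK]] := poly_bnd_meas p.
case: nd => mf f0 f1 Fdef f2.
have hb : [bounded p.[F x] | x in [set: R]].
  rewrite /bounded_near; near=> M => t _ /=.
  apply: le_trans (HK _ (F01 t)) _.
  near: M; apply: nbhs_pinfty_ge; exact: num_real.
have mp' : measurable_fun [set: measurableTypeR R] (fun t : measurableTypeR R => p.[F t]) := mp.
have hb' : [bounded p.[F x] | x in [set: measurableTypeR R]] := hb.
have H := integrableMr measurableT mp' hb' f2.
by move: H; apply: eq_integrable.
Unshelve. all: end_near. Qed.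

Definition Ip p := Rintegral lebesgue_measure [set: R] (hp p).

Lemma Ip_add : {morph Ip : p q / p + q}.
Proof.
move=> p q; rewrite /Ip -RintegralD //; try exact: hp_int.
by apply: eq_Rintegral => t _; rewrite /hp hornerD mulrDl.
Qed.

Lemma Ip0 : Ip 0 = 0.
Proof.
rewrite /Ip (_ : hp 0 = fun=> 0); last by apply/funext => t; rewrite /hp horner0 mul0r.
by rewrite Rintegral_cst // mul0r.
Qed.

Lemma IpZ c p : Ip (c *: p) = c * Ip p.
Proof.
rewrite /Ip -RintegralZl //; last exact: hp_int.
congr Rintegral; apply/funext => t /=. by rewrite /hp hornerZ -mulrA.
Qed.

End Ana.

Lemma gsum1 {R : realType} (m : nat) :
  \sum_(1 <= k < m.+2) ('C(m.+1 - 1, k - 1))%:R *: @gpoly R m.+1 k = 1.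
Proof.
rewrite big_add1 /= big_mkord.
have := exprDn 'X (1 - 'X : {poly R}) m.
rewrite addrC subrK expr1n => ->.
apply: eq_bigr => i _.
by rewrite /gpoly subSS !subn1 /= scaler_nat subn0 subSS.
Qed.

Section B.
Context {R : realType} (F f : R -> R) (nd : noise_dist F f).

Definition G (q : {poly R}) := Ip F f q^`().

Lemma G_add : {morph G : p q / p + q}.
Proof. by move=> p q; rewrite /G derivD Ip_add. Qed.

Lemma G0 : G 0 = 0.
Proof. by rewrite /G -polyC0 derivC Ip0. Qed.

Lemma beta_G n k : beta n F f k = G (('C(n - 1, k - 1))%:R *: gpoly n k).
Proof. by rewrite /G derivZ IpZ. Qed.

Lemma Bsum_n n : (1 <= n)%N -> Bsum n F f n = 0.
Proof.
case: n => // m _.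
rewrite /Bsum (eq_bigr _ (fun k _ => beta_G m.+1 k)).
rewrite -(big_morph G G_add G0) gsum1 /G -polyC1 derivC.
exact: Ip0.
Qed.

Lemma B1_ge0 n : 0 <= Bsum n F f 1.
Proof.
rewrite /Bsum big_nat1 /beta mulr_ge0 //.
apply: Rintegral_ge0 => t _.
rewrite mulr_ge0 ?sqr_ge0 //.
rewrite /gpoly subnn expr0 mulr1 derivXn hornerMn hornerXn.
by rewrite mulrn_wge0 // exprn_ge0 //; case/andP: (F01 F f nd t).
Qed.
End B.

Section Alg.
Context {R : realType} (n : nat) (F f : R -> R).
Local Notation b k := (beta n F f k.+1).

Lemma sum_lt (s : nat) (g : nat -> R) : (s <= n)%N ->
  \sum_(i < n) (if (i < s)%N then g i else 0) = \sum_(i < s) g i.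
Proof.
move=> sn.
rewrite -(big_mkord xpredT (fun i => if (i < s)%N then g i else 0)).
rewrite (big_cat_nat (leq0n s) sn) /=.
rewrite [X in _ + X]big_nat_cond [X in _ + X]big1 ?addr0; last first.
  by move=> i /andP[/andP[si _] _]; rewrite ltnNge si.
rewrite big_mkord; apply: eq_bigr => i _; by rewrite ltn_ord.
Qed.

Lemma sum_ge (s : nat) (g : nat -> R) : (s <= n)%N ->
  \sum_(i < n) (if (s <= i)%N then g i else 0) = \sum_(i < n) g i - \sum_(i < s) g i.
Proof.
move=> sn; rewrite -(sum_lt _ g sn).
have -> : \sum_(i < n) g i = \sum_(i < n) (if (i < s)%N then g i else 0)
   + \sum_(i < n) (if (s <= i)%N then g i else 0).
  rewrite -big_split /=; apply: eq_bigr => i _.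
  by case: ltnP => _; rewrite ?addr0 ?add0r.
by rewrite addrAC subrr add0r.
Qed.

Lemma Bsum_ord s : Bsum n F f s = \sum_(i < s) b i.
Proof. by rewrite /Bsum big_add1 /= big_mkord. Qed.

Lemma Rv_vs s : (1 <= s <= n)%N -> Rv n F f (vs n s) = Bsum n F f s / s%:R.
Proof.
case/andP=> s1 sn; rewrite /Rv /vs Bsum_ord mulr_suml -(sum_lt _ (fun i => b i / s%:R) sn).
by apply: eq_bigr => i _; case: ifP; rewrite ?mulr0.
Qed.

Lemma Lv_vs s : (1 <= s <= n)%N ->
  Lv n F f (vs n s) = - (n%:R)^-1 *
    ((\sum_(i < n) b i) + n%:R * (Bsum n F f s / s%:R) - Bsum n F f s *+ 2).
Proof.
case/andP=> s1 sn; rewrite /Lv; congr (_ * _).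
set B := Bsum n F f s.
have s0 : s%:R != 0 :> R by rewrite pnatr_eq0 -lt0n.
have inner (i : 'I_n) : \sum_(j < n | (j < i)%N) (b i + b j) * (vs n s j - vs n s i)
    = if (s <= i)%N then b i + B / s%:R else 0.
  rewrite big_mkcond /=.
  case: (leqP s i) => si; last first.
    apply: big1 => j _; rewrite /vs; case: ifP => // ji.
    by rewrite (ltn_trans ji si) si subrr mulr0.
  rewrite (eq_bigr (fun j : 'I_n => if (j < s)%N then (b i + b j) / s%:R else 0)); last first.
    move=> j _; rewrite /vs (ltnNge i s) si /= subr0.
    case: (ltnP j s) => js; first by rewrite (leq_trans js si).
    by case: ifP => _; rewrite ?mulr0.
  rewrite (sum_lt _ (fun j => (b i + b j) / s%:R) sn) -mulr_suml big_split /=.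
  by rewrite sumr_const card_ord /B Bsum_ord mulrDl -(mulr_natr (b i) s) mulfK.
rewrite (eq_bigr _ (fun i _ => inner i)) (sum_ge _ (fun i => b i + B / s%:R) sn).
rewrite !big_split /= !sumr_const !card_ord -(Bsum_ord s) -/B.
have -> : B / s%:R *+ s = B by rewrite -(mulr_natr (B / s%:R)) divfK.
by rewrite -(mulr_natl (B / s%:R) n) mulr2n.
Qed.

Lemma Mv_vs (theta : R) s : Bsum n F f n = 0 -> (1 <= s <= n)%N ->
  Mv n F f (vs n s) theta = Ar n F f theta s.
Proof.
move=> Bn hs; have /andP[s1 sn] := hs.
have s0 : s%:R != 0 :> R by rewrite pnatr_eq0 -lt0n.
have n0 : n%:R != 0 :> R by rewrite pnatr_eq0 -lt0n (leq_trans s1 sn).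
rewrite /Mv Rv_vs // Lv_vs // -Bsum_ord Bn /Ar.
by field; rewrite s0 n0.
Qed.

Lemma Rv_sum (lam : 'I_n -> R) (u : 'I_n -> 'I_n -> R) :
  Rv n F f (fun i => \sum_(s < n) lam s * u s i) = \sum_(s < n) lam s * Rv n F f (u s).
Proof.
rewrite /Rv; under eq_bigr do rewrite mulr_sumr.
rewrite exchange_big /=; apply: eq_bigr => s _; rewrite mulr_sumr.
by apply: eq_bigr => i _; rewrite mulrCA.
Qed.

Lemma Lv_sum (lam : 'I_n -> R) (u : 'I_n -> 'I_n -> R) :
  Lv n F f (fun i => \sum_(s < n) lam s * u s i) = \sum_(s < n) lam s * Lv n F f (u s).
Proof.
rewrite /Lv.
under eq_bigr do under eq_bigr do rewrite -sumrB mulr_sumr.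
under eq_bigr do rewrite exchange_big /=.
rewrite exchange_big /= mulr_sumr; apply: eq_bigr => s _.
rewrite [RHS]mulrCA; congr (_ * _).
rewrite mulr_sumr; apply: eq_bigr => i _.
rewrite mulr_sumr; apply: eq_bigr => j _.
by rewrite -mulrBr mulrCA.
Qed.

Lemma Mv_sum (theta : R) (lam : 'I_n -> R) (u : 'I_n -> 'I_n -> R) :
  Mv n F f (fun i => \sum_(s < n) lam s * u s i) theta
  = \sum_(s < n) lam s * Mv n F f (u s) theta.
Proof.
rewrite /Mv Rv_sum Lv_sum mulr_sumr -big_split /=.
by apply: eq_bigr => s _; rewrite mulrDr mulrCA.
Qed.

End Alg.

Section Decomp.
Context {R : realType} (m : nat).
Local Notation n := m.+1.
Variable v : 'I_n -> R.
Definition vn (k : nat) : R := if (k < n)%N then v (inord k) else 0.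
Definition lam (s : 'I_n) : R := (s.+1)%:R * (vn s - vn s.+1).

Lemma tel k : \sum_(s < k) (vn s - vn s.+1) = vn 0 - vn k.
Proof.
rewrite -(big_mkord xpredT (fun s => vn s - vn s.+1)).
rewrite (eq_bigr (fun s => -(vn s.+1 - vn s))); last by move=> *; rewrite opprB.
by rewrite sumrN telescope_sumr // opprB.
Qed.

Lemma decomp (i : 'I_n) : v i = \sum_(s < n) lam s * vs n s.+1 i.
Proof.
rewrite (eq_bigr (fun s : 'I_n => if (i <= s)%N then vn s - vn s.+1 else 0)); last first.
  move=> s _; rewrite /lam /vs ltnS; case: ifP => _; last by rewrite mulr0.
  by rewrite mulrAC mulfV ?mul1r // pnatr_eq0.
rewrite (sum_ge _ _ (fun s => vn s - vn s.+1) (ltnW (ltn_ord i))) !tel.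
by rewrite /vn ltnn ltn_ord inord_val subr0 opprB addrC subrK.
Qed.

End Decomp.

Lemma cross {R : realType} (K1 K2 K3 K4 c c' : R) :
  0 < K2 -> 0 < K4 -> 0 <= c -> K3 * K4 <= K1 * K2 ->
  K2 * c' <= K3 * c -> K1 * c <= K4 * c' ->
  (K2 * c' < K3 * c \/ K1 * c < K4 * c') -> False.
Proof.
move=> K2p K4p c0 hK h1 h2 hs.
have e1 : K3 * K4 * c <= K1 * K2 * c by rewrite ler_wpM2r.
have e2 : K2 * c' * K4 <= K3 * c * K4 by rewrite ler_wpM2r // ltW.
have e3 : K1 * c * K2 <= K4 * c' * K2 by rewrite ler_wpM2r // ltW.
case: hs => hs.
  have e2' : K2 * c' * K4 < K3 * c * K4 by rewrite ltr_pM2r.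
  nra.
have e3' : K1 * c * K2 < K4 * c' * K2 by rewrite ltr_pM2r.
nra.
Qed.

Lemma vs_sum {R : realType} n k : (1 <= k <= n)%N -> \sum_(i < n) @vs R n k i = 1.
Proof.
case/andP=> k1 kn; rewrite /vs.
rewrite (sum_lt _ _ (fun _ => (k%:R)^-1) kn) sumr_const card_ord.
by rewrite -(mulr_natr (k%:R^-1)) mulVf // pnatr_eq0 -lt0n.
Qed.

Lemma Mv_le {R : realType} (m : nat) (F f : R -> R) (theta A : R) (v : 'I_m.+1 -> R) :
  in_V m.+1 v -> Bsum m.+1 F f m.+1 = 0 ->
  (forall s, (1 <= s <= m.+1)%N -> Ar m.+1 F f theta s <= A) ->
  Mv m.+1 F f v theta <= A.
Proof.
case=> vmono vpos vsum Bn hA.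
have hv : v = fun i => \sum_(s < m.+1) lam _ v s * vs m.+1 s.+1 i.
  by apply/funext => i; exact: decomp.
have lam0 s : 0 <= lam _ v s.
  rewrite /lam mulr_ge0 // subr_ge0 /vn ltn_ord.
  case: ifP => hs; last by rewrite inord_val vpos.
  by apply: vmono; rewrite !inordK // ltnW.
have lsum : \sum_(s < m.+1) lam _ v s = 1.
  rewrite -vsum; under [RHS]eq_bigr => i _ do rewrite (decomp _ v i).
  rewrite exchange_big /=; apply: eq_bigr => s _.
  by rewrite -mulr_sumr vs_sum ?mulr1 //= ltn_ord.
rewrite hv Mv_sum.
apply: le_trans (_ : \sum_(s < m.+1) lam _ v s * A <= A).
  apply: ler_sum => s _; apply: ler_wpM2l => //.
  by rewrite Mv_vs //=; apply: hA; rewrite /= ltn_ord.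
by rewrite -mulr_suml lsum mul1r.
Qed.

Theorem proposition2 (R : realType) (n : nat) (F f : R -> R) :
  (2 <= n)%N -> noise_dist F f ->
  (* (i) *)
  (forall (theta : R) (rs : nat), 0 <= theta <= 1 ->
     is_argmax n F f theta rs ->
     [/\ in_V n (@vs R n rs),
         (forall v : 'I_n -> R, in_V n v -> Mv n F f v theta <= Mv n F f (@vs R n rs) theta) &
         Mv n F f (@vs R n rs) theta = Ar n F f theta rs])
  /\
  (* (ii) *)
  (forall (theta theta' : R), 0 <= theta -> theta < theta' -> theta' <= 1 ->
     (forall r r', is_max_argmax n F f theta r -> is_max_argmax n F f theta' r' -> (r <= r')%N)
     /\
     (forall r r', is_min_argmax n F f theta r -> is_min_argmax n F f theta' r' -> (r <= r')%N)).
Proof.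
case: n => [//|m] hn nd.
have Bn := Bsum_n F f nd m.+1 isT.
have B1 := B1_ge0 F f nd m.+1.
have nR : 0 < m.+1%:R :> R by rewrite ltr0n.
pose k (th : R) (r : nat) := 1 + th * (2 * r%:R / m.+1%:R - 1).
have ArE th r : Ar m.+1 F f th r = k th r * (Bsum m.+1 F f r / r%:R).
  by rewrite /Ar /k mulrA.
have kpos th r : 0 <= th <= 1 -> (1 <= r)%N -> 0 < k th r.
  case/andP=> t0 t1 r1.
  have x0 : 0 < 2 * r%:R / m.+1%:R :> R.
    by apply: divr_gt0 => //; apply: mulr_gt0 => //; rewrite ltr0n.
  have tx : 0 <= th * (2 * r%:R / m.+1%:R) by rewrite mulr_ge0 // ltW.
  rewrite /k mulrBr mulr1.
  move: tx x0; set x := 2 * r%:R / m.+1%:R; set y := th * x => tx x0.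
  have [th1|th1] := ltP th 1; first lra.
  have e : th = 1 by apply/eqP; rewrite eq_le t1 th1.
  have yx : y = x by rewrite /y e mul1r.
  rewrite e; lra.
have A1 th : 0 <= th <= 1 -> 0 <= Ar m.+1 F f th 1.
  move=> ht; rewrite ArE; apply: mulr_ge0; first by rewrite ltW ?kpos.
  exact: divr_ge0.
have one_rng : (1 <= 1 <= m.+1 - 1)%N by rewrite subn1 /=; move: hn; rewrite ltnS.
have cge0 th r : 0 <= th <= 1 -> is_argmax m.+1 F f th r ->
    0 <= Bsum m.+1 F f r / r%:R.
  move=> ht [hr hmax].
  have := le_trans (A1 th ht) (hmax 1%N one_rng).
  rewrite ArE pmulr_rge0 // kpos //; by case/andP: hr.
split.
  move=> th rs ht [hr hmax].
  have rsn : (1 <= rs <= m.+1)%N.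
    case/andP: hr => -> /= h; apply: leq_trans h _; exact: leq_subr.
  have Mrs : Mv m.+1 F f (vs m.+1 rs) th = Ar m.+1 F f th rs by exact: Mv_vs.
  split => //.
  - split.
    + move=> i j ij; rewrite /vs; case: (ltnP j rs) => jr.
        by rewrite (leq_ltn_trans ij jr).
      by case: ifP => _ //; rewrite invr_ge0 ler0n.
    + by move=> i; rewrite /vs; case: ifP => _ //; rewrite invr_ge0 ler0n.
    + exact: vs_sum.
  - move=> v hv; rewrite Mrs; apply: Mv_le => // s /andP[s1 sm].
    case: (ltnP s m.+1) => hs.
      by apply: hmax; rewrite s1 subn1 /= -ltnS.
    have -> : s = m.+1 by apply/eqP; rewrite eqn_leq sm hs.
    rewrite /Ar Bn mulr0 mul0r.
    exact: le_trans (A1 th ht) (hmax 1%N one_rng).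
move=> th th' h0 hlt h1.
have ht : 0 <= th <= 1 by rewrite h0 /= ltW // (lt_le_trans hlt h1).
have ht' : 0 <= th' <= 1 by rewrite h1 andbT ltW // (le_lt_trans h0 hlt).
have key r r' : is_argmax m.+1 F f th r -> is_argmax m.+1 F f th' r' -> (r' < r)%N ->
    Ar m.+1 F f th r' <= Ar m.+1 F f th r -> Ar m.+1 F f th' r <= Ar m.+1 F f th' r' ->
    (Ar m.+1 F f th r' < Ar m.+1 F f th r \/ Ar m.+1 F f th' r < Ar m.+1 F f th' r') -> False.
  move=> hr hr' rr' e1 e2 es.
  have r'1 : (1 <= r')%N by case: hr' => /andP[].
  have r1 : (1 <= r)%N by case: hr => /andP[].
  move: e1 e2 es; rewrite !ArE.
  apply: cross; [exact: kpos|exact: kpos|exact: (cge0 th r)|].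
  rewrite -subr_ge0.
  have -> : k th' r * k th r' - k th r * k th' r' =
      (th' - th) * (2 * r%:R / m.+1%:R - 2 * r'%:R / m.+1%:R) :> R.
    rewrite /k; ring.
  apply: mulr_ge0; first by rewrite subr_ge0 ltW.
  rewrite subr_ge0 ler_wpM2r ?invr_ge0 ?ler0n // ler_wpM2l // ler_nat ltnW //.
split.
  move=> r r' [hr hrmax] [hr' hr'max]; rewrite leqNgt; apply/negP => lt.
  apply: (key r r' hr hr' lt (hr.2 r' hr'.1) (hr'.2 r hr.1)); right.
  rewrite ltNge; apply/negP => le.
  have : is_argmax m.+1 F f th' r.
    split; first exact: hr.1.
    by move=> s hs; apply: le_trans (hr'.2 s hs) le.
  by move/hr'max; rewrite leqNgt lt.
move=> r r' [hr hrmin] [hr' hr'min]; rewrite leqNgt; apply/negP => lt.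
apply: (key r r' hr hr' lt (hr.2 r' hr'.1) (hr'.2 r hr.1)); left.
rewrite ltNge; apply/negP => le.
have : is_argmax m.+1 F f th r'.
  split; first exact: hr'.1.
  by move=> s hs; apply: le_trans (hr.2 s hs) le.
by move/hrmin; rewrite leqNgt lt.
Qed.
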